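(* Let $(X,\|\cdot\|_X)$ be a Banach space and $\mathcal{K}\subset X$ compact. (i) If for some constants $c_1>0$, $\alpha>0$, $\beta\in\mathbb{R}$ we have $\varepsilon_n(\mathcal{K})_X>c_1\frac{(\log_2n)^\beta}{n^\alpha}$ for all $n\ge2$, then for each $\gamma>0$ there exists $C>0$ such that $d_n^\gamma(\mathcal{K})_X\ge C\frac{(\log_2n)^{\beta-\alpha}}{n^\alpha}$ for all $n\ge2$. (ii) If for some constants $c_1>0$, $\alpha>0$ we have $\varepsilon_n(\mathcal{K})_X>c_1(\log_2n)^{-\alpha}$ for all $n\ge2$, then for each $\gamma>0$ there exists $C>0$ such that $d_n^\gamma(\mathcal{K})_X\ge C(\log_2n)^{-\alpha}$ for all $n\ge2$. (iii) If for some constants $c_1,c>0$ and $0<\alpha<1$ we have $\varepsilon_n(\mathcal{K})_X>c_12^{-cn^\alpha}$ for $n=1,2,\dots$, then for each $\gamma\ge2\,\mathrm{rad}(\mathcal{K})$ there exist constants $C,c_2>0$ such that $d_n^\gamma(\mathcal{K})_X\ge C2^{-c_2n^{\alpha/(1-\alpha)}}$ for $n=1,2,\dots$.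
   Context: $\mathrm{rad}(\mathcal{K})=\inf_{g\in X}\sup_{f\in\mathcal{K}}\|f-g\|_X$. For $m\ge0$, the entropy number $\varepsilon_m(\mathcal{K})_X$ is the infimum of all $\varepsilon>0$ such that $\mathcal{K}$ is covered by $2^m$ closed balls of radius $\varepsilon$ with centers in $X$. For $k\ge1$ and a norm $\|\cdot\|_{Y_k}$ on $\mathbb{R}^k$ let $B_{Y_k}=\{y\in\mathbb{R}^k:\|y\|_{Y_k}\le1\}$. For $\gamma\ge0$, the fixed Lipschitz width is $d^\gamma(\mathcal{K},Y_k)_X=\inf_{\Phi}\sup_{f\in\mathcal{K}}\inf_{y\in B_{Y_k}}\|f-\Phi(y)\|_X$, the infimum over all maps $\Phi:B_{Y_k}\to X$ with $\|\Phi(y)-\Phi(y')\|_X\le\gamma\|y-y'\|_{Y_k}$ for all $y,y'\in B_{Y_k}$. The Lipschitz width is $d_n^\gamma(\mathcal{K})_X=\inf_{1\le k\le n}\inf_{\|\cdot\|_{Y_k}}d^\gamma(\mathcal{K},Y_k)_X$, the inner infimum over all norms on $\mathbb{R}^k$. *)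

(* Defs.v *)
From HB Require Import structures.
From mathcomp Require Import all_boot all_order all_algebra.
From mathcomp Require Import all_classical all_reals all_analysis.
Set Implicit Arguments. Unset Strict Implicit. Unset Printing Implicit Defensive.
Import Order.TTheory GRing.Theory Num.Theory.
Import numFieldNormedType.Exports.
Local Open Scope classical_set_scope.
Local Open Scope ring_scope.

Definition is_norm (R : realType) (k : nat) (N : 'rV[R]_k -> R) : Prop :=
  [/\ (forall x, 0 <= N x),
      (forall x, N x = 0 -> x = 0),
      (forall (a : R) x, N (a *: x) = `|a| * N x) &
      (forall x y, N (x + y) <= N x + N y)].

Definition unit_ball (R : realType) (k : nat) (N : 'rV[R]_k -> R) : set 'rV[R]_k :=
  [set y | N y <= 1].

Definition cball (R : realType) (X : normedModType R) (c : X) (e : R) : set X :=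
  [set x | `|x - c| <= e].

Definition cheb_rad (R : realType) (X : normedModType R) (K : set X) : \bar R :=
  ereal_inf [set ereal_sup [set (`|f - g|)%:E | f in K] | g in [set: X]].

Definition entropy_number (R : realType) (X : normedModType R) (K : set X)
    (m : nat) : \bar R :=
  ereal_inf [set e%:E | e in [set e : R | 0 < e /\
     exists c : 'I_(2 ^ m) -> X, K `<=` \bigcup_(i in [set: 'I_(2 ^ m)]) cball (c i) e]].

Definition fixed_lip_width (R : realType) (X : normedModType R) (K : set X)
    (gamma : R) (k : nat) (N : 'rV[R]_k -> R) : \bar R :=
  ereal_inf [set ereal_sup [set ereal_inf [set (`|f - Phi y|)%:E | y in unit_ball N]
                             | f in K]
            | Phi in [set Phi : 'rV[R]_k -> X | forall y y',
                 unit_ball N y -> unit_ball N y' ->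
                 `|Phi y - Phi y'| <= gamma * N (y - y')]].

Definition lip_width (R : realType) (X : normedModType R) (K : set X)
    (gamma : R) (n : nat) : \bar R :=
  ereal_inf [set d | exists (k : nat) (N : 'rV[R]_k -> R),
     [/\ (1 <= k <= n)%N, is_norm N & d = fixed_lip_width K gamma N]].

Definition log2 (R : realType) (x : R) : R := ln x / ln 2.

(* Main.v *)
Require Import Defs.
From HB Require Import structures.
From mathcomp Require Import all_boot all_order all_algebra.
From mathcomp Require Import all_classical all_reals all_analysis.
From mathcomp Require Import ring lra.
From mathcomp Require Import perm.
From mathcomp Require Import zify.
Import Order.TTheory GRing.Theory Num.Theory.
Import numFieldNormedType.Exports.
Local Open Scope classical_set_scope.
Local Open Scope ring_scope.
Set Implicit Arguments. Unset Strict Implicit. Unset Printing Implicit Defensive.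

Section NormFacts.
Variables (R : realType) (k : nat) (N : 'rV[R]_k -> R).
Hypothesis hN : is_norm N.

Lemma N_ge0 x : 0 <= N x. Proof. by case: hN. Qed.
Lemma N_eq0 x : N x = 0 -> x = 0. Proof. by case: hN => _ H _ _; apply: H. Qed.
Lemma NZ a x : N (a *: x) = `|a| * N x. Proof. by case: hN => _ _ H _; apply: H. Qed.
Lemma ND x y : N (x + y) <= N x + N y. Proof. by case: hN => _ _ _ H; apply: H. Qed.
Lemma N0 : N 0 = 0.
Proof. by rewrite -(scale0r (0 : 'rV[R]_k)) NZ normr0 mul0r. Qed.
Lemma NN x : N (- x) = N x.
Proof. by rewrite -scaleN1r NZ normrN normr1 mul1r. Qed.

Lemma N_sum (I : Type) (r : seq I) (P : pred I) (F : I -> 'rV[R]_k) :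
  N (\sum_(i <- r | P i) F i) <= \sum_(i <- r | P i) N (F i).
Proof.
elim/big_rec2: _ => [|i y1 y2 _ H]; first by rewrite N0.
by apply: le_trans (ND _ _) _; rewrite lerD2l.
Qed.

Lemma entry_le_norm (y : 'rV[R]_k) j : `|y 0 j| <= `|y|.
Proof.
rewrite [leRHS]/Num.norm /= mx_normrE; apply/bigmax_geP; right => /=.
by exists (0, j).
Qed.

Definition NC := \sum_(j < k) N 'e_j.

Lemma NC_ge0 : 0 <= NC.
Proof. by apply: sumr_ge0 => j _; apply: N_ge0. Qed.

Lemma N_le_norm y : N y <= NC * `|y|.
Proof.
rewrite {1}(row_sum_delta y). apply: le_trans; first exact: N_sum.
rewrite /NC mulr_suml; apply: ler_sum => j _.
by rewrite NZ mulrC ler_wpM2l ?N_ge0 ?entry_le_norm.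
Qed.

Lemma N_lip x y : `|N x - N y| <= NC * `|x - y|.
Proof.
apply: le_trans (N_le_norm _).
have H1 : N y <= N x + N (x - y).
  rewrite -[in N y](subrK x y) addrC (le_trans (ND _ _)) //.
  by rewrite -opprB NN.
have H2 : N x <= N y + N (x - y).
  by rewrite -[in N x](subrK y x) addrC; apply: ND.
rewrite ler_norml; apply/andP; split; lra.
Qed.

Lemma N_cont : continuous N.
Proof.
move=> x; apply/(@cvgrPdist_lt _ _ _ _ (nbhs_filter x) N (N x)) => e e0.
have H1 : 0 < NC + 1 by apply: (le_lt_trans NC_ge0); rewrite ltrDl.
apply/nbhs_ballP; exists (e / (NC + 1)); first by simpl; apply: divr_gt0.
move=> y; rewrite -ball_normE /= => hy.
apply: (le_lt_trans (N_lip _ _)).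
apply: (@le_lt_trans _ _ ((NC + 1) * `|x - y|)).
  by rewrite ler_wpM2r ?normr_ge0 // lerDl.
by rewrite -ltr_pdivlMl // mulrC.
Qed.

End NormFacts.

Lemma N_lower (R : realType) (k : nat) (N : 'rV[R]_k -> R) (hN : is_norm N) : exists2 m, 0 < m & forall y, m * `|y| <= N y.
Proof.
case: k N hN => [|k'] N' hN'.
  by exists 1 => // y; rewrite thinmx0 normr0 mulr0; case: hN'.
pose S := [set y : 'rV[R]_k'.+1 | `|y| = 1].
have S0 : S !=set0.
  exists ('e_(ord0 : 'I_k'.+1) : 'rV[R]_k'.+1) => /=.
  change (mx_norm ('e_(ord0 : 'I_k'.+1) : 'rV[R]_k'.+1) = 1); rewrite mx_normrE.
  apply/eqP; rewrite eq_le; apply/andP; split.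
    apply/bigmax_leP; split => // -[i j] _ /=; rewrite mxE.
    by case: (_ && _); rewrite ?normr1 ?normr0.
  apply/bigmax_geP; right; exists (0, ord0) => //=.
  by rewrite mxE !eqxx normr1.
have Sc : compact S.
  apply: bounded_closed_compact.
    exists 1; split => // M hM y /= ->; exact: ltW.
  rewrite (_ : S = Num.norm @^-1` [set 1]); last by [].
  apply: preimage_closed; last exact: closed_eq.
  by move=> x _; apply: norm_continuous.
have [c Sc' Hc] := compact_EVT_min S0 Sc (continuous_subspaceT (N_cont hN')).
have cne0 : c != 0.
  apply/eqP => c0; move: Sc'; rewrite inE /S /= c0 normr0 => /eqP.
  by rewrite eq_sym oner_eq0.
have m0 : 0 < N' c.
  rewrite lt_neqAle (N_ge0 hN') andbT; apply/eqP => /esym/(N_eq0 hN').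
  by apply/eqP.
exists (N' c) => // y.
have [->|yne0] := eqVneq y 0; first by rewrite normr0 mulr0 (N_ge0 hN').
have ny0 : 0 < `|y| by rewrite normr_gt0.
have := Hc (`|y|^-1 *: y); rewrite inE /S /= normfZV // => /(_ erefl).
rewrite (NZ hN') ger0_norm; last by rewrite invr_ge0 ltW.
by rewrite ler_pdivlMl // mulrC.
Qed.


Lemma det_bound (R : realType) (k : nat) (X : 'M[R]_k) (B : R) :
  0 <= B -> (forall i j, `|X i j| <= B) -> `|\det X| <= #|{perm 'I_k}|%:R * B ^+ k.
Proof.
move=> B0 HB; rewrite /determinant.
apply: le_trans (ler_norm_sum _ _ _) _.
rewrite -sum1_card natr_sum mulr_suml; apply: ler_sum => s _.
rewrite normrM normrX normrN normr1 expr1n mul1r mul1r normr_prod.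
have -> : B ^+ k = \prod_(i < k) B by rewrite prodr_const card_ord.
apply: ler_prod => i _.
by rewrite normr_ge0 HB.
Qed.

Definition repl_row (R : realType) (k : nat) (X : 'M[R]_k) (i : 'I_k) (y : 'rV[R]_k) :
  'M[R]_k := \matrix_(p, q) (if p == i then y 0 q else X p q).

Lemma cramer (R : realType) (k : nat) (X : 'M[R]_k) (y : 'rV[R]_k) (i : 'I_k) :
  X \in unitmx -> (y *m invmx X) 0 i = \det (repl_row X i y) / \det X.
Proof.
move=> Xu; rewrite /invmx Xu -scalemxAr mxE mulrC; congr (_ * _).
rewrite (expand_det_row _ i) mxE; apply: eq_bigr => j _.
rewrite !mxE eqxx; congr (_ * _).
rewrite /cofactor; congr (_ * \det _).
by apply/matrixP => p q; rewrite !mxE eq_sym (negbTE (neq_lift _ _)).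
Qed.

Lemma good_basis (R : realType) (k : nat) (N : 'rV[R]_k -> R) (hN : is_norm N) :
  exists X : 'M[R]_k, [/\ forall i, N (row i X) <= 1, X \in unitmx &
    forall y, N y <= 1 -> forall i, `|(y *m invmx X) 0 i| <= 2].
Proof.
have [m m0 Hm] := N_lower hN.
pose adm := [set X : 'M[R]_k | forall i, N (row i X) <= 1].
pose E := [set `|\det X| | X in adm].
have Hent : forall X, adm X -> forall i j, `|X i j| <= m^-1.
  move=> X hX i j.
  have -> : X i j = (row i X) 0 j by rewrite mxE.
  rewrite -(ler_pM2l m0) mulrV ?unitfE ?gt_eqF //.
  apply: le_trans (hX i).
  apply: le_trans (Hm (row i X)); apply: ler_wpM2l; [exact: ltW | exact: entry_le_norm].
have ub : ubound E (#|{perm 'I_k}|%:R * m^-1 ^+ k).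
  move=> _ [X hX <-]; apply: det_bound; first by rewrite invr_ge0 ltW.
  exact: Hent.
pose c := (1 + NC N)^-1.
have c0 : 0 < c by rewrite invr_gt0; apply: (lt_le_trans ltr01); rewrite lerDl NC_ge0.
have X0adm : adm (c *: 1%:M).
  move=> i.
  have -> : row i (c *: (1%:M : 'M[R]_k)) = c *: 'e_i.
    apply/rowP => j; rewrite !mxE eqxx /=; congr (_ * _); by rewrite eq_sym.
  rewrite (NZ hN) (ger0_norm (ltW c0)).
  have hi : N 'e_i <= 1 + NC N.
    rewrite /NC (bigD1 i) //= addrCA lerDl addr_ge0 //.
    by rewrite sumr_ge0 // => j _; apply: N_ge0.
  apply: le_trans (ler_wpM2l (ltW c0) hi) _.
  rewrite /c mulVf // gt_eqF //.
  by apply: (lt_le_trans ltr01); rewrite lerDl NC_ge0.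
have hasE : has_sup E.
  split; first by exists `|\det (c *: (1%:M : 'M[R]_k))|; exists (c *: 1%:M).
  by exists (#|{perm 'I_k}|%:R * m^-1 ^+ k).
pose s := sup E.
have cs : c ^+ k <= s.
  apply: sup_upper_bound => //; exists (c *: 1%:M) => //.
  by rewrite detZ det1 mulr1 ger0_norm // exprn_ge0 // ltW.
have s0 : 0 < s by apply: lt_le_trans cs; rewrite exprn_gt0.
have s20 : 0 < s / 2 by apply: divr_gt0 => //; apply: ltr0Sn.
have [_ [X hX <-] hlt] := sup_adherent s20 hasE.
have dX0 : 0 < `|\det X|.
  by apply: le_lt_trans hlt; rewrite -/s; lra.
have Xu : X \in unitmx by rewrite unitmxE unitfE -normr_gt0.
exists X; split => // y hy i.
rewrite cramer // normrM normrV ?unitfE -?normr_gt0 // ler_pdivrMr //.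
have hXi : E `|\det (repl_row X i y)|.
  exists (repl_row X i y) => // p.
  have [->|pi] := eqVneq p i.
    by have -> : row i (repl_row X i y) = y by apply/rowP => j; rewrite !mxE eqxx.
  have -> : row p (repl_row X i y) = row p X by apply/rowP => j; rewrite !mxE (negbTE pi).
  exact: hX.
apply: le_trans (sup_upper_bound hasE hXi) _; rewrite -/s.
move: hlt; rewrite -/s => hlt.
have : s <= 2 * `|\det X| by move: hlt; lra.
by rewrite mulrC.
Qed.


Lemma idx_close (R : realType) (s : nat) (u u' : R) :
  0 <= u <= 2 ^+ s -> 0 <= u' <= 2 ^+ s ->
  minn (Num.truncn u) (2 ^ s).-1 = minn (Num.truncn u') (2 ^ s).-1 ->
  `|u - u'| <= 1.
Proof.
move=> /andP[u0 u1] /andP[u'0 u'1] e.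
have hM : ((2 ^ s).-1%:R + 1 : R) = 2 ^+ s.
  by rewrite natr1 prednK ?expn_gt0 // natrX.
have t1 : (Num.truncn u)%:R <= u by rewrite truncn_le.
have t2 : u < (Num.truncn u).+1%:R by apply: truncnS_gt.
have t1' : (Num.truncn u')%:R <= u' by rewrite truncn_le.
have t2' : u' < (Num.truncn u').+1%:R by apply: truncnS_gt.
move: t2 t2'; rewrite -!natr1 => t2 t2'.
case: (leqP (2 ^ s).-1 (Num.truncn u)) => h1; case: (leqP (2 ^ s).-1 (Num.truncn u')) => h2.
- have r1 : ((2 ^ s).-1%:R : R) <= (Num.truncn u)%:R by rewrite ler_nat.
  have r2 : ((2 ^ s).-1%:R : R) <= (Num.truncn u')%:R by rewrite ler_nat.
  rewrite ler_norml; apply/andP; split; lra.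
- exfalso; lia.
- exfalso; lia.
- have et : Num.truncn u = Num.truncn u' by lia.
  rewrite et in t1 t2.
  rewrite ler_norml; apply/andP; split; lra.
Qed.

Lemma labeling (R : realType) (k : nat) (N : 'rV[R]_k -> R) (hN : is_norm N) (s : nat) :
  exists lab : 'rV[R]_k -> {ffun 'I_k -> 'I_(2 ^ s)},
  forall y y', N y <= 1 -> N y' <= 1 -> lab y = lab y' ->
    N (y - y') <= k%:R * (4 / 2 ^+ s).
Proof.
have [X [hrow Xu hc]] := good_basis hN.
pose h : R := 4 / 2 ^+ s.
have h0 : 0 < h by rewrite divr_gt0 // exprn_gt0.
have ord_pf : forall t : nat, (minn t (2 ^ s).-1 < 2 ^ s)%N.
  by move=> t; apply: leq_ltn_trans (geq_minr _ _) _; rewrite ltn_predL expn_gt0.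
pose idx (t : R) : 'I_(2 ^ s) := Ordinal (ord_pf (Num.truncn ((t + 2) / h))).
exists (fun y => [ffun i => idx ((y *m invmx X) 0 i)]).
move=> y y' hy hy' e.
have ei : forall i, `|(y *m invmx X) 0 i - (y' *m invmx X) 0 i| <= h.
  move=> i; have e' := congr1 (fun f : {ffun 'I_k -> 'I_(2 ^ s)} => val (f i)) e.
  rewrite /= !ffunE /= in e'.
  have bnd : forall t : R, `|t| <= 2 -> 0 <= (t + 2) / h <= 2 ^+ s.
    move=> t; rewrite ler_norml => /andP[t1 t2].
    apply/andP; split; first by apply: divr_ge0; [lra | exact: ltW].
    rewrite ler_pdivrMr // /h mulrCA divff ?mulr1; last by rewrite gt_eqF // exprn_gt0.
    lra.
  have := idx_close (bnd _ (hc _ hy i)) (bnd _ (hc _ hy' i)) e'.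
  set a := (y *m invmx X) 0 i; set a' := (y' *m invmx X) 0 i.
  have -> : (a + 2) / h - (a' + 2) / h = (a - a') / h by ring.
  have hi0 : 0 <= h^-1 by rewrite invr_ge0 ltW.
  rewrite normrM (ger0_norm hi0).
  by rewrite ler_pdivrMr // mul1r.
rewrite -[y](mulmxKV Xu) -[y'](mulmxKV Xu) -mulmxBl mulmx_sum_row.
apply: le_trans; first exact: (N_sum hN).
have -> : k%:R * (4 / 2 ^+ s) = \sum_(i < k) h by rewrite sumr_const card_ord mulr_natl.
apply: ler_sum => i _; rewrite (NZ hN) -[h]mulr1.
apply: ler_pM; rewrite ?normr_ge0 ?(N_ge0 hN) //.
  by move: (ei i); rewrite !mxE.
Qed.


Lemma entropy_le_cover (R : realType) (X : normedModType R) (K : set X) (m : nat)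
  (I : finType) (i0 : I) (c : I -> X) (e : R) :
  0 < e -> (#|I| <= 2 ^ m)%N ->
  (forall x, K x -> exists i, `|x - c i| <= e) ->
  (entropy_number K m <= e%:E)%E.
Proof.
move=> e0 hI hK; apply: ereal_inf_lbound; exists e => //; split => //.
exists (fun j : 'I_(2 ^ m) => c (nth i0 (enum I) j)).
move=> x Kx; have [i hi] := hK x Kx.
have hj : (index i (enum I) < 2 ^ m)%N.
  by apply: leq_trans hI; rewrite cardT index_mem mem_enum.
exists (Ordinal hj) => //=.
by rewrite /cball /= nth_index ?mem_enum.
Qed.

Lemma main_bound (R : realType) (X : normedModType R) (K : set X) (gam : R) (n s : nat) :
  K !=set0 ->
  (entropy_number K (n * s) <=
     lip_width K gam n + (n%:R * (4 / 2 ^+ s) * `|gam|)%:E)%E.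
Proof.
move=> [f0 Kf0].
have r0 : 0 <= n%:R * (4 / 2 ^+ s) * `|gam| :> R.
  by rewrite mulr_ge0 // mulr_ge0 // divr_ge0 // exprn_ge0.
set r := n%:R * (4 / 2 ^+ s) * `|gam|.
rewrite -leeBlDr //.
apply/ereal_infP => _ [k [N [/andP[k1 kn] hN ->]]].
apply/ereal_infP => _ [Phi hPhi <-].
rewrite leeBlDr //.
set D := ereal_sup _.
have infle : forall f, K f ->
    (ereal_inf [set (`|f - Phi y|)%:E | y in unit_ball N] <= D)%E.
  by move=> f Kf; apply: ereal_sup_ubound; exists f.
have D0 : (0 <= D)%E.
  apply: le_trans (infle _ Kf0).
  by apply/ereal_infP => _ [y _ <-]; rewrite lee_fin normr_ge0.
have [Dfin|] := boolP (D \is a fin_num); last first.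
  move/fin_numPn => [Dn|->]; first by rewrite Dn in D0.
  by rewrite addye // leey.
have Dd : D = (fine D)%:E by rewrite fineK.
have d0 : 0 <= fine D by rewrite -lee_fin -Dd.
apply/lee_addgt0Pr => eta eta0.
rewrite Dd -!EFinD.
have [lab hlab] := labeling hN s.
pose rep v := xget (0 : 'rV[R]_k) [set y | N y <= 1 /\ lab y = v].
apply: (@entropy_le_cover _ _ _ _ _ (lab 0) (fun v => Phi (rep v))).
- by rewrite -!addrA; apply: (le_lt_trans d0); rewrite ltrDl; apply: (le_lt_trans r0); rewrite ltrDl.
- rewrite card_ffun !card_ord -expnM leq_exp2l //; nia.
move=> f Kf.
have : (ereal_inf [set (`|f - Phi y|)%:E | y in unit_ball N] < (fine D + eta)%:E)%E.
  by apply: (le_lt_trans (infle _ Kf)); rewrite Dd lte_fin ltrDl.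
move/ereal_inf_lt => [_ [y hy <-]]; rewrite lte_fin => hlt.
exists (lab y).
have [hp1 hp2] : N (rep (lab y)) <= 1 /\ lab (rep (lab y)) = lab y.
  by apply: (xgetPex 0 (P := [set y0 | N y0 <= 1 /\ lab y0 = lab y])); exists y.
have Np := hlab _ _ hy hp1 (esym hp2).
have L := hPhi _ _ hy hp1.
have t := ler_distD (Phi y) f (Phi (rep (lab y))).
have hk : (k%:R : R) <= n%:R by rewrite ler_nat.
have g1 : gam * N (y - rep (lab y)) <= `|gam| * N (y - rep (lab y)).
  by apply: ler_wpM2r; [apply: (N_ge0 hN) | apply: ler_norm].
have g2 : `|gam| * N (y - rep (lab y)) <= r.
  rewrite /r (mulrC `|gam|); apply: ler_wpM2r; first exact: normr_ge0.
  apply: le_trans Np _; apply: ler_wpM2r => //.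

lra.
Qed.


Lemma bridge (R : realType) (X : normedModType R) (K : set X) (gam : R) (n s : nat) (v : R) :
  K !=set0 ->
  ((v + n%:R * (4 / 2 ^+ s) * `|gam|)%:E < entropy_number K (n * s))%E ->
  (v%:E <= lip_width K gam n)%E.
Proof.
move=> K0 H; have := lt_le_trans H (main_bound gam n s K0).
rewrite EFinD lteD2rE // => /ltW. done.
Qed.

Section LogFacts.
Variable R : realType.

Lemma ln2_gt0 : 0 < ln (2 : R).
Proof. by apply: ln_gt0; rewrite ltr1n. Qed.

Lemma ln_nat_le (x : nat) : (1 <= x)%N -> ln (x%:R : R) <= x%:R * ln 2.
Proof.
move=> x1.
have -> : x%:R * ln (2 : R) = ln (2 ^+ x) by rewrite lnXn // mulr_natl.
rewrite ler_ln ?posrE ?ltr0n ?exprn_gt0 //.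
by rewrite -natrX ler_nat ltnW // ltn_expl.
Qed.

Lemma ln_nat_ge0 (x : nat) : (1 <= x)%N -> 0 <= ln (x%:R : R).
Proof. by move=> x1; apply: ln_ge0; rewrite ler1n. Qed.

Lemma ln_pos_le (x y : R) : 0 < x -> x <= y -> ln x <= ln y.
Proof. by move=> x0 xy; rewrite ler_ln ?posrE // (lt_le_trans x0). Qed.

Lemma le_ln (x y : R) : 0 < x -> 0 < y -> ln x <= ln y -> x <= y.
Proof. by move=> x0 y0; rewrite ler_ln ?posrE. Qed.

Lemma ln_powR' (x r : R) : ln (x `^ r) = r * ln x.
Proof. exact: ln_powR. Qed.

Lemma lnM' (x y : R) : 0 < x -> 0 < y -> ln (x * y) = ln x + ln y.
Proof. by move=> x0 y0; rewrite lnM ?posrE. Qed.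

Lemma lnV' (x : R) : 0 < x -> ln (x^-1) = - ln x.
Proof. by move=> x0; rewrite lnV ?posrE. Qed.

Lemma ln_le_sub1 (x : R) : 0 < x -> ln x <= x - 1.
Proof.
move=> x0; have := @le_ln1Dx R (x - 1).
have -> : 1 + (x - 1) = x by ring.
apply; lra.
Qed.

End LogFacts.


Lemma arith3 (R : realType) (a b c d : R) : 2 * a <= b -> c <= a -> d <= c -> a + d <= b.
Proof. lra. Qed.

Lemma asym_i (R : realType) (X : normedModType R) (K : set X) (c1 al be gam : R) :
  0 < c1 -> 0 <= al -> K !=set0 ->
  (forall n : nat, (2 <= n)%N ->
     ((c1 * (log2 (n%:R : R) `^ be) / (n%:R `^ al))%:E < entropy_number K n)%E) ->
  exists C : R, 0 < C /\ forall n : nat, (2 <= n)%N ->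
    ((C * (log2 (n%:R : R) `^ (be - al)) / (n%:R `^ al))%:E <= lip_width K gam n)%E.
Proof.
move=> c10 al0 K0 hyp.
have l2 := @ln2_gt0 R.
pose Q := al + `|be|.
have Q0 : 0 <= Q by rewrite addr_ge0.
pose P := 1 + al + `|be - al|.
pose p := (Num.truncn P).+1.
have pP : P <= p%:R by apply: ltW; apply: truncnS_gt.
pose M := 2 * (Q + 1) / ln 2.
have M0 : 0 < M by rewrite /M divr_gt0 // mulr_gt0 // ltr_pwDr.
pose W := ln 4 + ln 2 + ln (`|gam| + 1) - ln c1 + ln 2 / 2 * (2 * p%:R + 2) + Q * (ln M - 1).
pose A := (Num.truncn (2 * `|W| / ln 2)).+1.
have AW : W <= ln 2 / 2 * A%:R.
  have h1 : 2 * `|W| / ln 2 < A%:R by apply: truncnS_gt.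
  have h2 : 2 * `|W| < A%:R * ln 2 by rewrite -ltr_pdivrMr.
  have h3 : W <= `|W| by apply: ler_norm.
  lra.
have A1 : (1 <= A)%N by [].
clearbody A p.
pose D : R := (2 * p + A + 2)%:R.
have D1 : 1 <= D by rewrite /D ler1n addn2.
have D0 : 0 < D by lra.
have QD : Q * ln D <= ln 2 / 2 * D + Q * (ln M - 1).
  have e1 : ln D = ln (D / M) + ln M.
    have hDM : 0 < D / M by rewrite divr_gt0.
    by rewrite -lnM' // -mulrA mulVf ?mulr1 // gt_eqF.
  have e2 : ln (D / M) <= D / M - 1 by apply: ln_le_sub1; rewrite divr_gt0.
  have Q10 : 0 < Q + 1 by lra.
  have e3 : Q * (D / M) <= ln 2 / 2 * D.
    have -> : Q * (D / M) = (Q / (Q + 1)) * (ln 2 / 2 * D).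
      by rewrite /M; field; rewrite ?gt_eqF.
    apply: ler_piMl; first by rewrite mulr_ge0 ?divr_ge0 ?(ltW l2) ?(ltW D0).
    by rewrite ler_pdivrMr // mul1r lerDl.
  have e4 : Q * ln (D / M) <= Q * (D / M - 1) by apply: ler_wpM2l.
  rewrite e1 mulrDr; lra.
pose C := c1 * expR (- (Q * ln D)) / 2.
have C0 : 0 < C by rewrite /C divr_gt0 // mulr_gt0 // expR_gt0.
have lnC : ln C = ln c1 - Q * ln D - ln 2.
  have e0 : 0 < expR (- (Q * ln D)) by apply: expR_gt0.
  rewrite /C lnM' ?mulr_gt0 ?invr_gt0 // lnM' // expRK lnV' //; lra.
exists C; split => // n n2.
have n1 : (1 <= n)%N by apply: ltnW.
have n0 : (0 : R) < n%:R by rewrite ltr0n.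
have lnn2 : ln 2 <= ln (n%:R : R) by apply: ln_pos_le; rewrite ?ler_nat.
pose L := log2 (n%:R : R).
have L1 : 1 <= L by rewrite /L /log2 ler_pdivlMr // mul1r.
have L0 : 0 < L by lra.
have LlnL : L * ln 2 = ln (n%:R : R) by rewrite /L /log2 divfK // gt_eqF.
have Ln : L <= n%:R.
  by rewrite /L /log2 ler_pdivrMr //; apply: ln_nat_le.
have lnL0 : 0 <= ln L by apply: ln_ge0.
have lnLn : ln L <= ln (n%:R : R) by exact: ln_pos_le L0 Ln.
pose l := (Num.truncn L).+1.
have lL : L < l%:R by apply: truncnS_gt.
have lL2 : (l%:R : R) <= L + 1.
  rewrite /l -natr1 lerD2r truncn_le; lra.
pose s := (p * l + A)%N.
have s1 : (1 <= s)%N by rewrite /s; apply: leq_trans A1 (leq_addl _ _).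
have sR : (s%:R : R) = p%:R * l%:R + A%:R by rewrite /s natrD natrM.
have p0 : (0 : R) <= p%:R by rewrite ler0n.
have A0 : (0 : R) <= A%:R by rewrite ler0n.
have DR : D = 2 * p%:R + A%:R + 2 by rewrite /D !natrD; ring.
have sle0 : (s%:R : R) <= (2 * p%:R + A%:R) * L.
  have h1 : p%:R * l%:R <= p%:R * (2 * L) by apply: ler_wpM2l => //; lra.
  have h2 : (A%:R : R) <= A%:R * L by rewrite ler_peMr.
  rewrite sR; lra.
have sle : (s%:R : R) <= D * L.
  apply: le_trans sle0 _; rewrite ler_wpM2r ?(ltW L0) // DR; lra.
apply: (bridge (s := s)) => //.
have m2 : (2 <= n * s)%N by have := leq_mul n2 s1; rewrite muln1.
apply: le_lt_trans (hyp _ m2); rewrite lee_fin.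
have s0 : (0 : R) < s%:R by rewrite ltr0n.
have lns : ln (s%:R : R) <= ln D + ln L.
  by rewrite -lnM' //; apply: ln_pos_le.
have lnm : ln ((n * s)%:R : R) = ln (n%:R : R) + ln (s%:R : R) by rewrite natrM lnM'.
pose lm := log2 ((n * s)%:R : R).
have lm_eq : lm = L + log2 (s%:R : R) by rewrite /lm /log2 lnm mulrDl.
have log2s : log2 (s%:R : R) <= s%:R.
  by rewrite /log2 ler_pdivrMr //; apply: ln_nat_le s1.
have log2s0 : 0 <= log2 (s%:R : R).
  by rewrite /log2 divr_ge0 ?(ltW l2) // ln_nat_ge0.
have lmL : L <= lm by lra.
have lmD : lm <= D * L.
  have : (2 * p%:R + A%:R + 1) * L <= D * L by rewrite ler_wpM2r ?(ltW L0) // DR; lra.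
  lra.
rewrite -/L -/lm.
have lm0 : 0 < lm by lra.
have lnlm1 : ln L <= ln lm by exact: ln_pos_le L0 lmL.
have lnlm2 : ln lm <= ln D + ln L by rewrite -lnM' //; exact: ln_pos_le lm0 lmD.
have m0 : (0:R) < (n * s)%:R by rewrite natrM mulr_gt0.
have lnD0 : 0 <= ln D by apply: ln_ge0.
have lnn0 : 0 <= ln (n%:R : R) by lra.
have pL : 0 < L `^ (be - al) by apply: powR_gt0.
have pn : 0 < (n%:R : R) `^ al by apply: powR_gt0.
have plm : 0 < lm `^ be by apply: powR_gt0.
have pm : 0 < ((n * s)%:R : R) `^ al by apply: powR_gt0.
set v := C * L `^ (be - al) / n%:R `^ al.
set f := c1 * lm `^ be / (n * s)%:R `^ al.
have v0 : 0 < v by rewrite /v; apply: divr_gt0 => //; apply: mulr_gt0.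
have f0 : 0 < f by rewrite /f; apply: divr_gt0 => //; apply: mulr_gt0.
have lnv : ln v = ln C + (be - al) * ln L - al * ln (n%:R : R).
  have CX : 0 < C * L `^ (be - al) by apply: mulr_gt0.
  have Yi : 0 < (n%:R `^ al)^-1 by rewrite invr_gt0.
  by rewrite /v (lnM' CX Yi) (lnM' C0 pL) (lnV' pn) !ln_powR'; ring.
have lnf : ln f = ln c1 + be * ln lm - al * (ln (n%:R : R) + ln (s%:R : R)).
  have CX : 0 < c1 * lm `^ be by apply: mulr_gt0.
  have Yi : 0 < (((n * s)%:R : R) `^ al)^-1 by rewrite invr_gt0.
  by rewrite /f (lnM' CX Yi) (lnM' c10 plm) (lnV' pm) !ln_powR' lnm; ring.
have hbe : be * ln L - `|be| * ln D <= be * ln lm.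
  case: (leP 0 be) => hb.
  - have h1 : be * ln L <= be * ln lm by apply: ler_wpM2l.
    have h2 : 0 <= `|be| * ln D by rewrite mulr_ge0.
    lra.
  - have h1 : be * (ln D + ln L) <= be * ln lm by rewrite ler_wnM2l // ltW.
    rewrite ltr0_norm //; lra.
have hal : al * (ln (n%:R : R) + ln (s%:R : R)) <= al * ln (n%:R : R) + al * (ln D + ln L).
  by rewrite -mulrDr ler_wpM2l // lerD2l.
have Ha : 2 * v <= f.
  apply: le_ln; [by rewrite mulr_gt0 | done |].
  rewrite lnM' // lnv lnf lnC /Q; lra.
have e1 : n%:R * (4 / 2 ^+ s) * `|gam| <= n%:R * (4 / 2 ^+ s) * (`|gam| + 1).
  by rewrite ler_wpM2l ?mulr_ge0 ?divr_ge0 ?exprn_ge0 ?ler0n // lerDl.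
have p2s : (0 : R) < 2 ^+ s by rewrite exprn_gt0.
have g10 : 0 < `|gam| + 1 by rewrite ltr_pwDr.
set err' := n%:R * (4 / 2 ^+ s) * (`|gam| + 1).
have err'0 : 0 < err' by rewrite /err' !mulr_gt0 // invr_gt0.
have lnerr : ln err' = ln (n%:R : R) + (ln 4 - s%:R * ln 2) + ln (`|gam| + 1).
  have i2 : 0 < (2 ^+ s : R)^-1 by rewrite invr_gt0.
  have q4 : 0 < 4 / (2 ^+ s : R) by apply: mulr_gt0.
  have nq : 0 < n%:R * (4 / (2 ^+ s : R)) by apply: mulr_gt0.
  rewrite /err' (lnM' nq g10) (lnM' n0 q4) (lnM' _ i2) // (lnV' p2s) lnXn // mulr_natl; ring.
have hl : ln (n%:R : R) <= l%:R * ln 2 by rewrite -LlnL ler_wpM2r // ltW.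
have hsl : p%:R * ln (n%:R : R) + A%:R * ln 2 <= s%:R * ln 2.
  rewrite sR mulrDl -mulrA lerD2r; exact: ler_wpM2l.
have hpP : P * ln (n%:R : R) <= p%:R * ln (n%:R : R) by apply: ler_wpM2r.
have hba : - (`|be - al| * ln (n%:R : R)) <= (be - al) * ln L.
  have h1 : - `|be - al| <= be - al by rewrite lerNl -normrN ler_norm.
  have h2 : - `|be - al| * ln L <= (be - al) * ln L by apply: ler_wpM2r.
  have h3 : `|be - al| * ln L <= `|be - al| * ln (n%:R : R) by apply: ler_wpM2l.
  clear -h2 h3; lra.
have Hb : err' <= v.
  apply: le_ln => //.
  rewrite lnerr lnv lnC.
  have hW := AW; rewrite /W in hW.
  have QD' := QD; rewrite {2}DR in QD'.
  rewrite /P in hpP; rewrite /Q in QD' hW *.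
  have ln4 : ln (4 : R) = 2 * ln 2.
    have -> : (4 : R) = 2 * 2 by rewrite -natrM.
    by rewrite lnM' //; ring.
  clear -QD' hW hpP hsl hba ln4 lnn0 l2; lra.
exact: arith3 Ha Hb e1.
Qed.


Lemma asym_iii (R : realType) (X : normedModType R) (K : set X) (c1 c al gam : R) :
  0 < c1 -> 0 < c -> 0 < al -> al < 1 -> K !=set0 ->
  (forall n : nat, (1 <= n)%N ->
     ((c1 * (2 `^ (- (c * (n%:R `^ al)))))%:E < entropy_number K n)%E) ->
  exists C c2 : R, [/\ 0 < C, 0 < c2 & forall n : nat, (1 <= n)%N ->
     ((C * (2 `^ (- (c2 * (n%:R `^ (al / (1 - al)))))))%:E <= lip_width K gam n)%E].
Proof.
move=> c10 c0 al0 al1 K0 hyp.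
have l2 := @ln2_gt0 R.
have two0 : (0 : R) < 2 by lra.
have al10 : 0 < 1 - al by lra.
pose r := al / (1 - al).
have r0 : 0 < r by rewrite /r divr_gt0.
have rid : al + al * r = r by rewrite /r; field; rewrite gt_eqF.
have g10 : 0 < `|gam| + 1 by rewrite ltr_pwDr.
pose K0' := ln 4 + ln (`|gam| + 1) - ln c1 + ln 2.
pose Bm := 2 * (r^-1 + `|K0'|) / ln 2 + 1.
have Bm1 : 1 <= Bm.
  rewrite /Bm lerDr; apply: divr_ge0; last exact: ltW.
  by rewrite mulr_ge0 // addr_ge0 // invr_ge0 ltW.
pose B := Bm + (2 * c) `^ (1 - al)^-1.
have pc : 0 <= (2 * c) `^ (1 - al)^-1 by apply: powR_ge0.
have B1 : 1 <= B by rewrite /B; lra.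
have B10 : 0 < B + 1 by lra.
have BK : r^-1 + `|K0'| <= (B - 1) / 2 * ln 2.
  have h : (Bm - 1) / 2 * ln 2 = r^-1 + `|K0'|.
    by rewrite /Bm; field; rewrite !gt_eqF.
  rewrite -h; apply: ler_wpM2r; first exact: ltW.
  by rewrite /B; lra.
pose c2 := c * (B + 1) `^ al.
have c20 : 0 < c2 by rewrite /c2 mulr_gt0 // powR_gt0.
have c2B : c2 <= (B + 1) / 2.
  apply: le_ln => //; first by rewrite divr_gt0.
  have h1 : ln ((2 * c) `^ (1 - al)^-1) <= ln (B + 1).
    have pcpos : 0 < (2 * c) `^ (1 - al)^-1 by apply: powR_gt0; apply: mulr_gt0.
    apply: ln_pos_le => //.
    rewrite /B; lra.
  rewrite ln_powR' (lnM' two0 c0) in h1.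
  have h2 : ln 2 + ln c <= (1 - al) * ln (B + 1).
    by have := ler_wpM2l (ltW al10) h1; rewrite mulrA mulfV ?gt_eqF // mul1r.
  have pB : 0 < (B + 1) `^ al by apply: powR_gt0.
  have i2 : 0 < (2:R)^-1 by rewrite invr_gt0.
  rewrite /c2 (lnM' c0 pB) ln_powR' (lnM' B10 i2) (lnV' two0).
  clear -h2; lra.
pose C := c1 / 2.
have C0 : 0 < C by rewrite /C divr_gt0.
exists C, c2; split => // n n1.
have n0 : (0:R) < n%:R by rewrite ltr0n.
have lnn0 : 0 <= ln (n%:R : R) by apply: ln_nat_ge0.
pose x := (n%:R : R) `^ r.
have x0 : 0 < x by apply: powR_gt0.
have lnx : ln x = r * ln (n%:R : R) by rewrite /x ln_powR'.
have x1 : 1 <= x.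
  apply: le_ln => //.
  by rewrite ln1 lnx mulr_ge0 // ltW.
have lnnx : ln (n%:R : R) <= r^-1 * x.
  have h := ln_le_sub1 x0; rewrite lnx in h.
  rewrite -(ler_pM2l r0) mulrA mulfV ?gt_eqF // mul1r; lra.
pose s := (Num.truncn (B * x)).+1.
have sB : B * x < s%:R by apply: truncnS_gt.
have sB2 : (s%:R : R) <= B * x + 1.
  rewrite /s -natr1 lerD2r truncn_le; apply: mulr_ge0; lra.
have s1 : (1 <= s)%N by [].
have s0 : (0:R) < s%:R by rewrite ltr0n.
have sle : (s%:R : R) <= (B + 1) * x by rewrite mulrDl mul1r; lra.
clearbody s.
apply: (bridge (s := s)) => //.
have m1 : (1 <= n * s)%N by rewrite muln_gt0 n1.
apply: le_lt_trans (hyp _ m1); rewrite lee_fin -/r -/x.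
have pB : 0 < (B + 1) `^ al by apply: powR_gt0.
have pm : 0 < ((n * s)%:R : R) `^ al by apply: powR_gt0; rewrite ltr0n.
have hm : ((n * s)%:R : R) `^ al <= (B + 1) `^ al * x.
  apply: le_ln => //; first by apply: mulr_gt0.
  rewrite ln_powR' (lnM' pB x0) ln_powR' lnx natrM (lnM' n0 s0).
  have lns : ln (s%:R : R) <= ln (B + 1) + r * ln (n%:R : R).
    by rewrite -lnx -(lnM' B10 x0); apply: ln_pos_le.
  have h1 : al * ln (s%:R : R) <= al * (ln (B + 1) + r * ln (n%:R : R)).
    by apply: ler_wpM2l => //; apply: ltW.
  have h2 := congr1 (fun t => t * ln (n%:R : R)) rid; simpl in h2.
  clear -h1 h2; lra.
have Ha : 2 * (C * 2 `^ (- (c2 * x))) <= c1 * 2 `^ (- (c * ((n * s)%:R `^ al))).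
  have -> : 2 * (C * 2 `^ (- (c2 * x))) = c1 * 2 `^ (- (c2 * x)) by rewrite /C; field.
  rewrite ler_pM2l //.
  apply: ler_powR; first by rewrite ler1n.
  rewrite lerN2 /c2 -mulrA; apply: ler_wpM2l => //; exact: ltW.
have e1 : n%:R * (4 / 2 ^+ s) * `|gam| <= n%:R * (4 / 2 ^+ s) * (`|gam| + 1).
  by rewrite ler_wpM2l ?mulr_ge0 ?divr_ge0 ?exprn_ge0 ?ler0n // lerDl.
have p2s : (0 : R) < 2 ^+ s by rewrite exprn_gt0.
have lnerr : ln (n%:R * (4 / 2 ^+ s) * (`|gam| + 1)) =
    ln (n%:R : R) + (ln 4 - s%:R * ln 2) + ln (`|gam| + 1).
  have i2 : 0 < (2 ^+ s : R)^-1 by rewrite invr_gt0.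
  have q4 : 0 < 4 / (2 ^+ s : R) by apply: mulr_gt0.
  have nq : 0 < n%:R * (4 / (2 ^+ s : R)) by apply: mulr_gt0.
  rewrite (lnM' nq g10) (lnM' n0 q4) (lnM' _ i2) // (lnV' p2s) lnXn // mulr_natl; ring.
have Hb : n%:R * (4 / 2 ^+ s) * (`|gam| + 1) <= C * 2 `^ (- (c2 * x)).
  apply: le_ln.
  - by apply: mulr_gt0 => //; apply: mulr_gt0 => //; apply: mulr_gt0 => //; rewrite invr_gt0.
  - by apply: mulr_gt0 => //; apply: powR_gt0.
  have p2 : 0 < (2 : R) `^ (- (c2 * x)) by apply: powR_gt0.
  have i2 : 0 < (2:R)^-1 by rewrite invr_gt0.
  rewrite lnerr (lnM' C0 p2) ln_powR' /C (lnM' c10 i2) (lnV' two0).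
  have ln4 : ln (4 : R) = 2 * ln 2.
    have -> : (4 : R) = 2 * 2 by rewrite -natrM.
    by rewrite lnM' //; ring.
  have f1 : B * x * ln 2 <= s%:R * ln 2 by apply: ler_wpM2r; [exact: ltW | exact: ltW].
  have f2 : c2 * x * ln 2 <= (B + 1) / 2 * x * ln 2.
    apply: ler_wpM2r; first exact: ltW.
    by apply: ler_wpM2r; first exact: ltW.
  have f3 : (r^-1 + `|K0'|) * x <= (B - 1) / 2 * ln 2 * x.
    by apply: ler_wpM2r; first exact: ltW.
  have f4 : K0' <= `|K0'| * x.
    apply: le_trans (ler_norm K0') _; rewrite ler_peMr //.
  rewrite /K0' in f3 f4.
  clear -f1 f2 f3 f4 ln4 lnnx; lra.
exact: arith3 Ha Hb e1.
Qed.


Lemma K_nonempty (R : realType) (X : normedModType R) (K : set X) (m : nat) (v : R) :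
  0 < v -> (v%:E < entropy_number K m)%E -> K !=set0.
Proof.
move=> v0 hv; have [//|nK] := pselect (K !=set0).
have := @entropy_le_cover R X K m unit tt (fun _ => 0) v v0.
rewrite card_unit expn_gt0 /= => /(_ isT).
have : forall x, K x -> exists i : unit, `|x - 0| <= v.
  by move=> x Kx; exfalso; apply: nK; exists x.
move=> H /(_ H) hle.
by have := lt_le_trans hv hle; rewrite ltxx.
Qed.

Lemma log2_2_gt0 (R : realType) : 0 < log2 (2%:R : R).
Proof. by rewrite /log2 divr_gt0 // ln2_gt0. Qed.

Unset Implicit Arguments.

Theorem theorem4p7 (R : realType) (X : completeNormedModType R) (K : set X)
  (hK : compact K) :
  (* (i) *)
  (forall (c1 alpha beta : R), 0 < c1 -> 0 < alpha ->
     (forall n : nat, (2 <= n)%N ->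
        ((c1 * (log2 (n%:R : R) `^ beta) / (n%:R `^ alpha))%:E
          < entropy_number K n)%E) ->
     forall gamma : R, 0 < gamma -> exists C : R, 0 < C /\
       forall n : nat, (2 <= n)%N ->
         ((C * (log2 (n%:R : R) `^ (beta - alpha)) / (n%:R `^ alpha))%:E
           <= lip_width K gamma n)%E) /\
  (* (ii) *)
  (forall (c1 alpha : R), 0 < c1 -> 0 < alpha ->
     (forall n : nat, (2 <= n)%N ->
        ((c1 * (log2 (n%:R : R) `^ (- alpha)))%:E < entropy_number K n)%E) ->
     forall gamma : R, 0 < gamma -> exists C : R, 0 < C /\
       forall n : nat, (2 <= n)%N ->
         ((C * (log2 (n%:R : R) `^ (- alpha)))%:E <= lip_width K gamma n)%E) /\
  (* (iii) *)
  (forall (c1 c alpha : R), 0 < c1 -> 0 < c -> 0 < alpha -> alpha < 1 ->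
     (forall n : nat, (1 <= n)%N ->
        ((c1 * (2 `^ (- (c * (n%:R `^ alpha)))))%:E < entropy_number K n)%E) ->
     forall gamma : R, (2%:E * cheb_rad K <= gamma%:E)%E ->
       exists C c2 : R, [/\ 0 < C, 0 < c2 &
         forall n : nat, (1 <= n)%N ->
           ((C * (2 `^ (- (c2 * (n%:R `^ (alpha / (1 - alpha)))))))%:E
             <= lip_width K gamma n)%E]).
Proof.
split; [|split].
- move=> c1 al be c10 al0 hyp gam _.
  have K0 : K !=set0.
    apply: (K_nonempty _ (hyp 2%N isT)).
    by apply: divr_gt0; [apply: mulr_gt0 => //; apply: powR_gt0; exact: log2_2_gt0 | apply: powR_gt0].
  exact: asym_i c10 (ltW al0) K0 hyp.
- move=> c1 al c10 al0 hyp gam _.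
  have hyp' : forall n : nat, (2 <= n)%N ->
      ((c1 * (log2 (n%:R : R) `^ (- al)) / (n%:R `^ 0))%:E < entropy_number K n)%E.
    by move=> n n2; rewrite powRr0 divr1; apply: hyp.
  have K0 : K !=set0.
    apply: (K_nonempty _ (hyp 2%N isT)).
    by apply: mulr_gt0 => //; apply: powR_gt0; exact: log2_2_gt0.
  have [C [C0 HC]] := asym_i gam c10 (lexx 0) K0 hyp'.
  exists C; split => // n n2; have := HC n n2.
  by rewrite subr0 powRr0 divr1.
- move=> c1 c al c10 c0 al0 al1 hyp gam _.
  have K0 : K !=set0.
    apply: (K_nonempty _ (hyp 1%N isT)).
    by apply: mulr_gt0 => //; apply: powR_gt0.
  exact: asym_iii gam c10 c0 al0 al1 K0 hyp.
Qed.
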